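(* For every $n\ge 2$, the relation algebra $A_n$ is representable over $(\mathbb{Z}/2\mathbb{Z})^{3k+1}$ (a set of $2^{3k+1}$ points) for all sufficiently large $k\in\omega$. In particular, for $n\ge 14$ it suffices to take $k=n$, so $A_n$ has a representation over a set of $2^{3n+1}$ points for all $n\ge 14$.
   Context: For $n\ge 1$, $A_n$ denotes the finite integral symmetric relation algebra with atoms $1'$ (identity), $r$, $b_1,\dots,b_n$, all symmetric, in which a diversity cycle $xyz$ (with $x,y,z$ diversity atoms) is mandatory (i.e. $x;y\ge z$) if and only if it involves the atom $r$, and is forbidden (i.e. $x;y\cdot z=0$) otherwise. A representation of such a (simple) relation algebra over a set $U$ is an embedding into the full relation algebra $\langle \mathcal P(U\times U),\cup,{}^c,\circ,{}^{-1},\mathrm{Id}_U\rangle$. *)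

(* Defs.v *)
From HB Require Import structures.
From mathcomp Require Import all_boot all_order all_algebra.
Set Implicit Arguments. Unset Strict Implicit. Unset Printing Implicit Defensive.

(* Atoms of A_n:  None = 1' (identity),  Some None = r,  Some (Some i) = b_i. *)
Definition atom (n : nat) : finType := option (option 'I_n).

Definition idA {n} : atom n := None.
Definition rA {n} : atom n := Some None.
Definition is_div {n} (a : atom n) : bool := a != idA.

(* Composition of atoms in A_n (all atoms symmetric):
   1';y = {y}, x;1' = {x}; for diversity atoms x,y:
   1' <= x;y iff x = y (since x converse = x), and a diversity atom z is
   below x;y iff the cycle xyz involves r (mandatory), otherwise forbidden. *)
Definition atom_comp {n} (x y : atom n) : {set atom n} :=
  if x == idA then [set y]
  else if y == idA then [set x]
  else (if x == y then [set idA] else set0) :|: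
       [set z | is_div z && [|| x == rA, y == rA | z == rA]].

Definition An_join {n} (A B : {set atom n}) := A :|: B.
Definition An_compl {n} (A : {set atom n}) := ~: A.
Definition An_comp {n} (A B : {set atom n}) : {set atom n} :=
  \bigcup_(x in A) \bigcup_(y in B) atom_comp x y.
Definition An_conv {n} (A : {set atom n}) : {set atom n} := A. (* all atoms symmetric *)
Definition An_id {n} : {set atom n} := [set idA].

Definition rel_comp {U : finType} (R S : {set U * U}) : {set U * U} :=
  [set p | [exists z, ((p.1, z) \in R) && ((z, p.2) \in S)]].
Definition rel_conv {U : finType} (R : {set U * U}) : {set U * U} :=
  [set p | (p.2, p.1) \in R].
Definition rel_id (U : finType) : {set U * U} := [set p | p.1 == p.2].

Definition representation (n : nat) (U : finType)
    (f : {set atom n} -> {set U * U}) : Prop :=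
  injective f /\
  (forall A B, f (An_join A B) = f A :|: f B) /\
  (forall A, f (An_compl A) = ~: f A) /\
  (forall A B, f (An_comp A B) = rel_comp (f A) (f B)) /\
  (forall A, f (An_conv A) = rel_conv (f A)) /\
  f An_id = rel_id U.

Definition representable_over (n : nat) (U : finType) : Prop :=
  exists f : {set atom n} -> {set U * U}, representation f.

(* Main.v *)
Require Import Defs.
From HB Require Import structures.
From mathcomp Require Import all_boot all_order all_algebra.
From mathcomp Require Import zify.
Set Implicit Arguments. Unset Strict Implicit. Unset Printing Implicit Defensive.

(* Proof strategy: Cayley representation over (Z/2)^(3k+1).  A nonzero vector
   of weight >= 2k+1 is coloured b_i (a sum-free set), lower weights are r.
   The partition of the heavy vectors into n colours is obtained by a
   counting (probabilistic) argument. *)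

Lemma ind_from k0 (P : nat -> Prop) : P k0 -> (forall k, k0 <= k -> P k -> P k.+1) ->
  forall k, k0 <= k -> P k.
Proof.
move=> H0 HS; elim=> [|k IH]; first by rewrite leqn0 => /eqP <-.
rewrite leq_eqVlt => /orP [/eqP <- //|]; rewrite ltnS => H; exact: HS (IH H).
Qed.

Lemma bern_aux a j : a ^ j.+1 + j.+1 * a ^ j <= a.+1 ^ j.+1.
Proof.
elim: j => [|j IH]; first by rewrite !expn1 expn0 muln1 addn1.
rewrite [a.+1 ^ j.+2]expnS.
apply: leq_trans (leq_mul (leqnn a.+1) IH).
rewrite !expnS; nia.
Qed.

Lemma bern q : 0 < q -> (q - 1) ^ q * 2 <= q ^ q.
Proof.
case: q => // a _; rewrite subn1 /=.
apply: leq_trans (bern_aux a a); rewrite expnS; nia.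
Qed.

Lemma leq_expr x y L : x <= y -> x ^ L <= y ^ L.
Proof. by move=> H; elim: L => // L IH; rewrite !expnS leq_mul. Qed.

Lemma bern_pow q L F : 0 < q -> q * L <= F -> (q - 1) ^ F * 2 ^ L <= q ^ F.
Proof.
move=> q0 HF; rewrite -(subnK HF) !expnD.
have H1 : (q - 1) ^ (q * L) * 2 ^ L <= q ^ (q * L).
  by rewrite !expnM -expnMn; exact: (leq_expr _ (bern q0)).
rewrite -mulnA; apply: leq_mul H1; apply: leq_expr; lia.
Qed.

Lemma central a : 4 ^ a <= 'C(a.*2, a) * a.*2.+1.
Proof.
elim: a => [|a IH]; first by [].
have E1 := mul_bin_diag a.*2.+1 a.
have E2 := mul_bin_down a.*2.+2 a.+1.
have E : a.+1 * 'C(a.+1.*2, a.+1) = 2 * a.*2.+1 * 'C(a.*2, a).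
  move: E1 E2; rewrite /= doubleS.
  have -> : a.*2.+2 - a.+1 = a.+1 by lia.
  set X := 'C(a.*2.+2, a.+1); set Y := 'C(a.*2.+1, a.+1); set Z := 'C(a.*2, a).
  nia.
rewrite expnS doubleS -(leq_pmul2l (ltn0Sn a)).
move: E IH; rewrite doubleS.
set X := 'C(a.*2.+2, a.+1); set Z := 'C(a.*2, a); set P := 4 ^ a => E IH.
have E3 : a.+1 * (X * a.*2.+3) = 2 * a.*2.+3 * (Z * a.*2.+1) by nia.
rewrite E3; nia.
Qed.

Lemma N1 k : 14 <= k -> 16 * k ^ 5 <= 4 ^ k.-1.
Proof.
apply: (ind_from (P := fun k => 16 * k ^ 5 <= 4 ^ k.-1)).
  by have -> : 14.-1 = 13 by []; lia.
move=> j Hj IH.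
have -> : j.+1.-1 = (j.-1).+1 by lia.
have H : j.+1 ^ 5 <= 4 * j ^ 5 by clear IH; nia.
apply: (@leq_trans (16 * (4 * j ^ 5))); first by rewrite leq_mul2l H orbT.
by rewrite [4 ^ _.+1]expnS mulnCA leq_mul2l IH orbT.
Qed.

Lemma N2 k : 14 <= k -> 2 * (k ^ 2 + k) < 2 ^ k.
Proof.
apply: (ind_from (P := fun k => 2 * (k ^ 2 + k) < 2 ^ k)); first by lia.
move=> j Hj IH.
have H : 2 * (j.+1 ^ 2 + j.+1) <= 2 * (2 * (j ^ 2 + j)) by clear IH; nia.
apply: leq_ltn_trans H _; rewrite [2 ^ _.+1]expnS ltn_mul2l /=; exact: IH.
Qed.

Lemma prod_central a c k : 0 < k -> a + c = k.-1 -> 16 * k ^ 5 <= 4 ^ k.-1 ->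
  4 * k ^ 3 <= 'C(a.*2, a) * 'C(c.*2, c).
Proof.
move=> k0 Hac HN.
have h1 := central a; have h2 := central c.
have ha : a.*2.+1 <= 2 * k by lia.
have hc : c.*2.+1 <= 2 * k by lia.
have H4 : 4 ^ k.-1 = 4 ^ a * 4 ^ c by rewrite -expnD Hac.
set X := 'C(a.*2, a) in h1 *; set Y := 'C(c.*2, c) in h2 *.
have H5 : 16 * k ^ 5 <= X * Y * (4 * k ^ 2).
  apply: (leq_trans HN); rewrite H4.
  apply: leq_trans (leq_mul h1 h2) _.
  have : X * a.*2.+1 * (Y * c.*2.+1) = X * Y * (a.*2.+1 * c.*2.+1) by rewrite mulnACA.
  move=> ->; apply: leq_mul => //; nia.
have : 0 < 4 * k ^ 2 by rewrite muln_gt0 expn_gt0 k0.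
move=> H6; rewrite -(leq_pmul2r H6); nia.
Qed.

Lemma prod_central2 a c k : 0 < k -> a + c = k -> 16 * k ^ 5 <= 4 ^ k.-1 ->
  4 * k ^ 2 <= 'C(a.*2, a) * 'C(c.*2, c).
Proof.
move=> k0 Hac HN.
have h1 := central a; have h2 := central c.
have ha : a.*2.+1 <= 3 * k by lia.
have hc : c.*2.+1 <= 3 * k by lia.
have H4 : 4 ^ k = 4 ^ a * 4 ^ c by rewrite -expnD Hac.
have H4' : 4 ^ k = 4 * 4 ^ k.-1 by rewrite -expnS prednK.
set X := 'C(a.*2, a) in h1 *; set Y := 'C(c.*2, c) in h2 *.
have H5 : 4 * (16 * k ^ 5) <= X * Y * (9 * k ^ 2).
  apply: leq_trans (_ : 4 * (16 * k ^ 5) <= 4 * 4 ^ k.-1) _.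
    by rewrite leq_mul2l HN orbT.
  rewrite -H4' H4; apply: leq_trans (leq_mul h1 h2) _.
  have -> : X * a.*2.+1 * (Y * c.*2.+1) = X * Y * (a.*2.+1 * c.*2.+1) by rewrite mulnACA.
  apply: leq_mul => //; nia.
have H6 : 0 < 9 * k ^ 2 by rewrite muln_gt0 expn_gt0 k0.
rewrite -(leq_pmul2r H6); apply: leq_trans H5; nia.
Qed.


Section Count.
Variables (V I : finType).
Local Notation N := #|I|.
Local Notation FT := {ffun V -> I}.

Definition upd (F : FT) (x : V) (a : I) : FT := [ffun v => if v == x then a else F v].

Lemma upd_x F x a : upd F x a x = a. Proof. by rewrite ffunE eqxx. Qed.
Lemma upd_y F x a y : y != x -> upd F x a y = F y.
Proof. by move=> H; rewrite ffunE (negPf H). Qed.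

Definition invar (P : pred FT) (x : V) := forall F b, P (upd F x b) = P F.

Lemma count_fix (P : pred FT) (x : V) (a : I) : invar P x ->
  #|[pred F | P F & F x == a]| * N = #|P|.
Proof.
move=> HP.
have Heq : forall b, #|[pred F | P F & F x == b]| = #|[pred F | P F & F x == a]|.
  move=> b.
  have -> : #|[pred F | P F & F x == b]| = #|[set F | P F & F x == b]| by rewrite cardsE.
  have -> : [set F | P F & F x == b] = (fun F => upd F x b) @: [set F | P F & F x == a].
    apply/setP => G; rewrite inE; apply/andP/imsetP.
      move=> [H1 /eqP H2]; exists (upd G x a); first by rewrite inE HP H1 upd_x eqxx.
      apply/ffunP => v; rewrite !ffunE; case: eqP => [->|] //.
    move=> [F]; rewrite inE => /andP [H1 _] ->; by rewrite HP H1 upd_x eqxx.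
  rewrite card_in_imset ?cardsE //.
  move=> F G; rewrite !inE => /andP [_ /eqP HF] /andP [_ /eqP HG] E.
  apply/ffunP => v; have := congr1 (fun H : FT => H v) E; rewrite !ffunE.
  by case: eqP => [->|] //; rewrite HF HG.
have -> : #|P| = \sum_(F | P F) 1 by rewrite sum1_card.
rewrite (partition_big (fun F : FT => F x) predT) //=.
under eq_bigr => b _ do rewrite sum1_card Heq.
by rewrite sum_nat_const mulnC.
Qed.


Lemma count_single (P : pred FT) (x : V) (a : I) : invar P x ->
  #|[pred F | P F & F x != a]| * N = #|P| * (N - 1).
Proof.
move=> HP; have := count_fix a HP.
have := cardID [pred F : FT | F x == a] P.
have E1 : #|[predI P & [pred F : FT | F x == a]]| = #|[pred F | P F & F x == a]|.
  by apply: eq_card => F; rewrite !inE.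
have E2 : #|[predD P & [pred F : FT | F x == a]]| = #|[pred F | P F & F x != a]|.
  by apply: eq_card => F; rewrite !inE andbC.
rewrite E1 E2 => HID Hfix.
have -> : #|[pred F | P F & F x != a]| = #|P| - #|[pred F | P F & F x == a]|.
  by rewrite -HID addKn.
by rewrite mulnBl Hfix mulnBr muln1.
Qed.

Lemma count_pair (P : pred FT) (x y : V) (a b : I) : x != y ->
  invar P x -> invar P y ->
  #|[pred F | P F & ~~ ((F x == a) && (F y == b))]| * N ^ 2 = #|P| * (N ^ 2 - 1).
Proof.
move=> xy HPx HPy.
set Q := [pred F | P F & F x == a].
have HQ : invar Q y.
  move=> F c; rewrite !inE HPy upd_y // eq_sym //.
have h1 := count_fix a HPx.
have h2 := count_fix b HQ.
have := cardID [pred F : FT | (F x == a) && (F y == b)] P.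
have E1 : #|[predI P & [pred F : FT | (F x == a) && (F y == b)]]| = #|[pred F | Q F & F y == b]|.
  by apply: eq_card => F; rewrite !inE andbA.
have E2 : #|[predD P & [pred F : FT | (F x == a) && (F y == b)]]| =
   #|[pred F | P F & ~~ ((F x == a) && (F y == b))]|.
  by apply: eq_card => F; rewrite !inE andbC.
rewrite E1 E2 => HID.
have -> : #|[pred F | P F & ~~ ((F x == a) && (F y == b))]| =
   #|P| - #|[pred F | Q F & F y == b]| by rewrite -HID addKn.
have HP : #|P| = #|[pred F | Q F & F y == b]| * N ^ 2.
  by rewrite -h1 -h2 expnS expn1 mulnA.
by rewrite mulnBl -HP mulnBr muln1.
Qed.

Lemma forall_setD1 (T : finType) (S : {set T}) x0 (Q : pred T) : x0 \in S ->
  [forall x in S, Q x] = Q x0 && [forall x in S :\ x0, Q x].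
Proof.
move=> x0S; apply/forall_inP/andP => [H|[H0 H] x xS].
  split; first exact: H.
  by apply/forall_inP => x /setD1P [_ xS]; exact: H.
case: (x =P x0) => [->//|/eqP ne]; apply: (forall_inP H); by rewrite in_setD1 ne xS.
Qed.

Lemma count_all : #|[pred F : FT | true]| = N ^ #|V|.
Proof. by rewrite -card_ffun; apply: eq_card. Qed.

Lemma count_fam_pair (Fam : {set V}) (s : V -> V) (a b : I) :
  injective s -> (forall x, x \in Fam -> s x \notin Fam) ->
  forall S : {set V}, S \subset Fam ->
  #|[pred F : FT | [forall x in S, ~~ ((F x == a) && (F (s x) == b))]]| * (N ^ 2) ^ #|S|
   = N ^ #|V| * (N ^ 2 - 1) ^ #|S|.
Proof.
move=> sinj sout S; move Hc: #|S| => c; elim: c S Hc => [|c IH] S Hc SF.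
  have -> : S = set0 by apply/eqP; rewrite -cards_eq0 Hc.
  rewrite !expn0 !muln1 -count_all; apply: eq_card => F; rewrite !inE.
  by apply/forall_inP => x; rewrite in_set0.
have [x0 x0S] : exists x0, x0 \in S by apply/card_gt0P; rewrite Hc.
have Hc' : #|S :\ x0| = c by move: Hc; rewrite (cardsD1 x0 S) x0S add1n => -[].
have SF' : S :\ x0 \subset Fam by apply: subset_trans (subD1set _ _) SF.
have x0F : x0 \in Fam by apply: (subsetP SF).
set P' := [pred F : FT | [forall x in S :\ x0, ~~ ((F x == a) && (F (s x) == b))]].
have neq : forall u v, u \in Fam -> v \notin Fam -> v != u.
  by move=> u v uF vF; apply: contraNneq vF => ->.
have inv1 : invar P' x0.
  move=> F d; rewrite /P' !inE; apply/forall_inP/forall_inP => H x xS;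
  have := H x xS; move/setD1P: xS => [xx0 xS];
  have xF : x \in Fam by apply: (subsetP SF).
    by rewrite !upd_y // (neq _ _ x0F (sout _ xF)).
  by rewrite !upd_y // (neq _ _ x0F (sout _ xF)).
have inv2 : invar P' (s x0).
  have aux : forall F d x, x \in S :\ x0 ->
    ((upd F (s x0) d x == a) && (upd F (s x0) d (s x) == b)) = ((F x == a) && (F (s x) == b)).
    move=> F d x /setD1P [xx0 xS].
    have xF : x \in Fam by apply: (subsetP SF).
    have sxx : s x != s x0 by apply: contra xx0 => /eqP /sinj ->.
    have xsx : x != s x0 by rewrite eq_sym (neq _ _ xF (sout _ x0F)).
    by rewrite !upd_y.
  move=> F d; rewrite /P' !inE; apply/forall_inP/forall_inP => H x xS;
  by have := H x xS; rewrite aux.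
have x0s : x0 != s x0 by rewrite eq_sym (neq _ _ x0F (sout _ x0F)).
have := count_pair a b x0s inv1 inv2.
have -> : #|[pred F | P' F & ~~ ((F x0 == a) && (F (s x0) == b))]| =
  #|[pred F : FT | [forall x in S, ~~ ((F x == a) && (F (s x) == b))]]|.
  by apply: eq_card => F; rewrite !inE (forall_setD1 _ x0S) andbC.
move=> H; rewrite expnS mulnA H mulnAC.
have -> : #|P'| * (#|I| ^ 2) ^ c = #|I| ^ #|V| * (#|I| ^ 2 - 1) ^ c by exact: IH.
by rewrite [in RHS]expnSr mulnA.
Qed.

Lemma count_fam_single (a : I) (S : {set V}) :
  #|[pred F : FT | [forall x in S, F x != a]]| * N ^ #|S| = N ^ #|V| * (N - 1) ^ #|S|.
Proof.
move Hc: #|S| => c; elim: c S Hc => [|c IH] S Hc.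
  have -> : S = set0 by apply/eqP; rewrite -cards_eq0 Hc.
  rewrite !expn0 !muln1 -count_all; apply: eq_card => F; rewrite !inE.
  by apply/forall_inP => x; rewrite in_set0.
have [x0 x0S] : exists x0, x0 \in S by apply/card_gt0P; rewrite Hc.
have Hc' : #|S :\ x0| = c by move: Hc; rewrite (cardsD1 x0 S) x0S add1n => -[].
set P' := [pred F : FT | [forall x in S :\ x0, F x != a]].
have inv1 : invar P' x0.
  move=> F d; rewrite /P' !inE; apply/forall_inP/forall_inP => H x xS;
  have := H x xS; move/setD1P: xS => [xx0 xS]; by rewrite !upd_y.
have := count_single a inv1.
have -> : #|[pred F | P' F & F x0 != a]| =
  #|[pred F : FT | [forall x in S, F x != a]]|.
  by apply: eq_card => F; rewrite !inE (forall_setD1 _ x0S) andbC.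
move=> H; rewrite expnS mulnA H mulnAC.
have -> : #|P'| * #|I| ^ c = #|I| ^ #|V| * (#|I| - 1) ^ c by exact: IH.
by rewrite [in RHS]expnSr mulnA.
Qed.
End Count.

Import GRing.Theory.
Open Scope ring_scope.

Lemma F2cases (x : 'F_2) : x = 0 \/ x = 1.
Proof.
have: x \in enum 'F_2 by rewrite mem_enum.
have ->: enum 'F_2 = [:: 0; 1] by apply: (inj_map val_inj); rewrite val_enum_ord.
by rewrite !inE => /orP[/eqP|/eqP]; auto.
Qed.
Lemma F2_10 : (1 : 'F_2) != 0. Proof. by []. Qed.
Lemma F2add (x : 'F_2) : x + x = 0.
Proof. case: (F2cases x) => [->|->]; first by rewrite addr0. by apply: val_inj. Qed.

Definition sd (T : finType) (A B : {set T}) := (A :\: B) :|: (B :\: A).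

Section Cayley.
Variables (n : nat) (V : finZmodType) (col : V -> atom n).
Definition cayley (A : {set atom n}) : {set V * V} :=
  [set p | col (p.1 - p.2) \in A].

Hypothesis col_id : forall x, (col x == idA) = (x == 0).
Hypothesis col_opp : forall x, col (- x) = col x.
Hypothesis col_surj : forall a, exists x, col x = a.
Hypothesis col_sound : forall x y, col (x + y) \in atom_comp (col x) (col y).
Hypothesis col_compl : forall a b d, col d \in atom_comp a b ->
  exists x, col x = a /\ col (d - x) = b.

Lemma cayley_rep : representation cayley.
Proof.
split.
  move=> A B eqAB; apply/setP => a; have [x <-] := col_surj a.
  have := congr1 (fun S : {set V * V} => ((x, 0) : V * V) \in S) eqAB; rewrite !inE /= subr0.
  by [].
split; first by move=> A B; apply/setP => p; rewrite !inE.
split; first by move=> A; apply/setP => p; rewrite !inE.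
split.
  move=> A B; apply/setP => [[u v]]; rewrite !inE /= /An_comp; apply/idP/existsP.
    move/bigcupP => [a aA] /bigcupP [b bB] Hc.
    have [x [Hx1 Hx2]] := col_compl Hc.
    exists (u - x); rewrite !inE /= opprB addrC subrK Hx1 aA /=.
    by rewrite addrAC Hx2.
  move=> [z /andP [H1 H2]]; rewrite /cayley !inE /= in H1 H2; apply/bigcupP; exists (col (u - z)) => //.
  apply/bigcupP; exists (col (z - v)) => //.
  by have := col_sound (u - z) (z - v); rewrite addrA subrK.
split; first by move=> A; apply/setP => [[u v]]; rewrite !inE /= -opprB col_opp.
apply/setP => [[u v]]; rewrite !inE /= col_id subr_eq0.
by [].
Qed.
End Cayley.

Section Vec.
Variable m : nat.
Local Notation V := 'rV['F_2]_m.
Definition supp (x : V) : {set 'I_m} := [set i | x ord0 i != 0].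
Definition vec (S : {set 'I_m}) : V := \row_i (if i \in S then 1 else 0).

Lemma suppK S : supp (vec S) = S.
Proof. by apply/setP => i; rewrite !inE mxE; case: (i \in S). Qed.

Lemma supp_add x y : supp (x + y) = sd (supp x) (supp y).
Proof.
apply/setP => i; rewrite /sd !inE mxE.
by case: (F2cases (x ord0 i)) => [->|->]; case: (F2cases (y ord0 i)) => [->|->]; rewrite ?addr0 ?add0r ?F2add ?eqxx /=.
Qed.

Lemma supp_eq0 x : (supp x == set0) = (x == 0).
Proof.
apply/eqP/eqP => [H|->]; last by apply/setP => i; rewrite !inE mxE eqxx.
apply/rowP => i; rewrite mxE; apply/eqP; apply: contraT => Hi.
have: i \in supp x by rewrite inE. by rewrite H inE.
Qed.

Lemma oppV (x : V) : - x = x.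
Proof.
apply/rowP => i; rewrite mxE; case: (F2cases (x ord0 i)) => [->|->]; [by rewrite oppr0 | by apply: val_inj].
Qed.

Lemma addVK (x y : V) : x + y + y = x.
Proof. by rewrite -addrA -{2}(oppV y) subrr addr0. Qed.

Lemma card_sd (A B : {set 'I_m}) : (#|sd A B| <= #|~: A| + #|~: B|)%N.
Proof.
have -> : sd A B = sd (~: A) (~: B).
  by apply/setP => i; rewrite /sd !inE; case: (i \in A); case: (i \in B).
apply: leq_trans (leq_card_setU _ _) _; apply: leq_add; apply: subset_leq_card;
  by apply/subsetP => i; rewrite !inE => /andP[].
Qed.
End Vec.

Lemma exists_sub (T : finType) (A : {set T}) (j : nat) :
  (j <= #|A|)%N -> exists B : {set T}, B \subset A /\ #|B| = j.
Proof.
move=> Hj.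
have : (0 < #|[set B : {set T} | B \subset A & #|B| == j]|)%N by rewrite cards_draws bin_gt0.
case/card_gt0P => B; rewrite inE => /andP[H1 /eqP H2]; by exists B.
Qed.

Section Col.
Variables (n k : nat).
Local Notation m := (3 * k + 1)%N.
Local Notation V := 'rV['F_2]_m.
Variable F : V -> 'I_n.
Hypothesis Hk : (1 <= k)%N.

Definition col (x : V) : atom n :=
  if x == 0 then idA else if (#|supp x| <= 2 * k)%N then rA else Some (Some (F x)).

Definition i0 : 'I_m := @Ordinal m 0 (ltac:(by rewrite addn1)).

Lemma card_suppC (x : V) : #|~: supp x| = (m - #|supp x|)%N.
Proof. move: (cardsC (supp x)); rewrite card_ord; lia. Qed.

Lemma supp_le (x : V) : (#|supp x| <= m)%N.
Proof. by have := max_card (supp x); rewrite card_ord. Qed.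

Lemma big_neq0 (x : V) : (2 * k < #|supp x|)%N -> x != 0.
Proof. by move=> H; rewrite -supp_eq0; apply: contraTneq H => ->; rewrite cards0. Qed.

Lemma sumfree (x y : V) : (2 * k < #|supp x|)%N -> (2 * k < #|supp y|)%N ->
  (#|supp (x + y)| <= 2 * k)%N.
Proof.
move=> Hx Hy; rewrite supp_add; apply: leq_trans (card_sd _ _) _.
rewrite !card_suppC.
have := supp_le x; have := supp_le y.
lia.
Qed.

Lemma HD (d : V) : d != 0 -> exists x : V,
  [/\ x != 0, (#|supp x| <= 2 * k)%N, x + d != 0 & (#|supp (x + d)| <= 2 * k)%N].
Proof.
move=> Hd; set S := supp d.
have Sm : (#|S| <= m)%N by apply: supp_le.
have S0 : (0 < #|S|)%N by rewrite card_gt0 supp_eq0.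
case: (ltnP 1 #|S|) => Hs.
  have Hj : (#|S|./2 <= #|S|)%N by lia.
  have [A [AS Acard]] := exists_sub Hj.
  exists (vec A).
  have HA : sd A S = S :\: A.
    apply/setP => i; rewrite /sd in_setU !in_setD; case iA: (i \in A) => /=.
      by rewrite (subsetP AS i iA).
    by rewrite andbF.
  have HC : #|S :\: A| = (#|S| - #|A|)%N by rewrite cardsD (setIidPr AS).
  rewrite -!supp_eq0 supp_add suppK HA -!cards_eq0 HC Acard.
  split; lia.
have [j Hj] : exists j, j \notin S.
  case: (pickP (fun j => j \notin S)) => [j Hj|H]; first by exists j.
  have ST : S = setT by apply/setP => i; rewrite in_setT; exact: negbFE (H i).
  by move: Hs; rewrite ST cardsT card_ord; lia.
exists (vec (j |: S)).
have HA : sd (j |: S) S = [set j].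
  apply/setP => i; rewrite /sd in_setU !in_setD in_setU1 in_set1.
  case: (i =P j) => [->|] /=; first by rewrite (negPf Hj).
  by case: (i \in S).
rewrite -!supp_eq0 supp_add suppK HA -!cards_eq0 cards1 cardsU1 Hj.
split; lia.
Qed.

Hypothesis HB : forall d : V, d != 0 -> (#|supp d| <= 2 * k)%N ->
  forall i j : 'I_n, exists x : V,
  [/\ (2 * k < #|supp x|)%N, (2 * k < #|supp (x + d)|)%N, F x = i & F (x + d) = j].
Hypothesis HC : forall d : V, d != 0 -> forall i : 'I_n, exists x : V,
  [/\ (2 * k < #|supp x|)%N, F x = i, x + d != 0 & (#|supp (x + d)| <= 2 * k)%N].

Variant col_spec (x : V) : atom n -> Type :=
 | ColId of x = 0 : col_spec x idA
 | ColR of x != 0 & (#|supp x| <= 2 * k)%N : col_spec x rA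
 | ColB of (2 * k < #|supp x|)%N : col_spec x (Some (Some (F x))).

Lemma colP x : col_spec x (col x).
Proof.
rewrite /col; case: eqP => [->|/eqP H]; first by constructor.
by case: leqP => H2; constructor.
Qed.

Lemma col_id x : (col x == idA) = (x == 0).
Proof. by case: colP => [->|/negPf->|/big_neq0/negPf->]; rewrite ?eqxx. Qed.

Lemma col_opp x : col (- x) = col x.
Proof. by rewrite oppV. Qed.

Lemma col0 : col 0 = idA. Proof. by rewrite /col eqxx. Qed.
Lemma colR x : x != 0 -> (#|supp x| <= 2 * k)%N -> col x = rA.
Proof. by move=> H1 H2; rewrite /col (negPf H1) H2. Qed.
Lemma colB x : (2 * k < #|supp x|)%N -> col x = Some (Some (F x)).
Proof. by move=> H; rewrite /col (negPf (big_neq0 H)) leqNgt H. Qed.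

Lemma vec1_neq0 : vec [set i0] != 0.
Proof. by rewrite -supp_eq0 suppK -cards_eq0 cards1. Qed.

Lemma col_surj a : exists x, col x = a.
Proof.
case: a => [[i|]|].
- have [x [H1 H2 _ _]] := HC vec1_neq0 i; exists x.
  by rewrite colB // H2.
- exists (vec [set i0]); rewrite colR ?vec1_neq0 // suppK cards1; lia.
- by exists 0; rewrite col0.
Qed.

Lemma atom_comp_idl (b : atom n) : atom_comp idA b = [set b].
Proof. by rewrite /atom_comp eqxx. Qed.
Lemma atom_comp_idr (a : atom n) : atom_comp a idA = [set a].
Proof. by rewrite /atom_comp; case: eqP => [->|]; rewrite ?eqxx. Qed.
Lemma atom_comp_div (a b : atom n) : a != idA -> b != idA ->
  atom_comp a b = (if a == b then [set idA] else set0) :|: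
       [set z | is_div z && [|| a == rA, b == rA | z == rA]].
Proof. by move=> Ha Hb; rewrite /atom_comp (negPf Ha) (negPf Hb). Qed.

Lemma subV (x y : V) : x - y = x + y. Proof. by rewrite oppV. Qed.

Lemma col_sound x y : col (x + y) \in atom_comp (col x) (col y).
Proof.
have [->|x0] := eqVneq x 0; first by rewrite add0r col0 atom_comp_idl in_set1.
have [->|y0] := eqVneq y 0; first by rewrite addr0 col0 atom_comp_idr in_set1.
rewrite atom_comp_div ?col_id // in_setU inE.
have [xy0|xy0] := eqVneq (x + y) 0.
  have Exy : x = y by move/eqP: xy0; rewrite addr_eq0 oppV => /eqP.
  by rewrite xy0 col0 Exy eqxx in_set1 eqxx.
rewrite /is_div col_id xy0 /=; apply/orP; right.
case: (colP x) => [E|_ _|Bx]; first by rewrite E eqxx in x0.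
  by [].
case: (colP y) => [E|_ _|By]; first by rewrite E eqxx in y0.
  by rewrite orbT.
by rewrite colR // ?sumfree // !eqxx !orbT.
Qed.

Lemma col_compl a b d : col d \in atom_comp a b ->
  exists x, col x = a /\ col (d - x) = b.
Proof.
case: a => [a|]; last first.
  by rewrite atom_comp_idl in_set1 => /eqP Hd; exists 0; rewrite col0 subr0.
case: b => [b|]; last first.
  by rewrite atom_comp_idr in_set1 => /eqP Hd; exists d; rewrite subrr col0.
rewrite atom_comp_div // in_setU inE => /orP [].
  case: eqP => [[<-]|]; last by rewrite in_set0.
  rewrite in_set1 col_id => /eqP ->.
  have [x Hx] := col_surj (Some a); exists x; by rewrite sub0r col_opp Hx.
move=> /andP [Hd H].
have d0 : d != 0 by rewrite -col_id.
case: a H => [i|] H; case: b H => [j|] H.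
- move: H; rewrite /= => /eqP Hr.
  have Hs : (#|supp d| <= 2 * k)%N by case: (colP d) Hr => //; rewrite eqxx in d0.
  have [x [H1 H2 H3 H4]] := HB d0 Hs i j.
  by exists x; rewrite subV addrC !colB // H3 H4.
- have [x [H1 H2 H3 H4]] := HC d0 i.
  by exists x; rewrite subV addrC colB // ?colR // H2.
- have [y [H1 H2 H3 H4]] := HC d0 j.
  exists (y + d); split; first by rewrite colR.
  have -> : d - (y + d) = y by rewrite subV addrC addVK.
  by rewrite colB // H2.
- have [x [H1 H2 H3 H4]] := HD d0.
  by exists x; rewrite subV addrC !colR.
Qed.

Lemma rep_col : representation (cayley col).
Proof.
apply: cayley_rep.
- exact: col_id.
- exact: col_opp.
- exact: col_surj.
- exact: col_sound.
- exact: col_compl.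
Qed.
End Col.

Import GRing.Theory.
Open Scope ring_scope.

Lemma cardU_le (T : finType) (A B : {set T}) : (#|A :|: B| <= #|A| + #|B|)%N.
Proof. by rewrite cardsU leq_subr. Qed.
Lemma cardU1_le (T : finType) (x : T) (A : {set T}) : (#|x |: A| <= #|A|.+1)%N.
Proof. by rewrite cardsU1; case: (x \notin A). Qed.

Lemma sd_complA (T : finType) (A B : {set T}) : sd (~: A) B = ~: sd A B.
Proof. by apply/setP => i; rewrite /sd !inE; case: (i \in A); case: (i \in B). Qed.
Lemma sd_compl2 (T : finType) (A B : {set T}) : sd (~: A) (~: B) = sd A B.
Proof. by apply/setP => i; rewrite /sd !inE; case: (i \in A); case: (i \in B). Qed.

Lemma split_key (T : finType) (X Y A C : {set T}) : A \subset X -> C \subset Y ->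
  [disjoint X & Y] -> (A :|: C) :&: X = A /\ (A :|: C) :&: Y = C.
Proof.
move=> AX CY dis.
have dXY : forall i, i \in X -> i \in Y -> False.
  by move=> i iX iY; move/disjoint_setI0/setP/(_ i): dis; rewrite !inE iX iY.
split; apply/setP => i; rewrite !inE.
  apply/andP/idP => [[/orP[iA|iC] iX] //|iA]; last by rewrite iA (subsetP AX _ iA).
  by case: (dXY i iX (subsetP CY _ iC)).
apply/andP/idP => [[/orP[iA|iC] iY] //|iC]; last by rewrite iC orbT (subsetP CY _ iC).
by case: (dXY i (subsetP AX _ iA) iY).
Qed.

Lemma split_inj (T : finType) (X Y A1 C1 A2 C2 : {set T}) :
  A1 \subset X -> A2 \subset X -> C1 \subset Y -> C2 \subset Y ->
  [disjoint X & Y] -> A1 :|: C1 = A2 :|: C2 -> A1 = A2 /\ C1 = C2.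
Proof.
move=> A1X A2X C1Y C2Y dis E.
have [h1 h2] := split_key A1X C1Y dis.
have [h3 h4] := split_key A2X C2Y dis.
by split; [rewrite -h1 -h3 E | rewrite -h2 -h4 E].
Qed.

Section Fam.
Variable k : nat.
Local Notation m := (3 * k + 1)%N.
Local Notation V := 'rV['F_2]_m.
Hypothesis Hk : (14 <= k)%N.

Lemma cardsC_m (Z : {set 'I_m}) : #|~: Z| = (m - #|Z|)%N.
Proof. by move: (cardsC Z); rewrite card_ord; lia. Qed.
Lemma card_le_m (Z : {set 'I_m}) : (#|Z| <= m)%N.
Proof. by have := max_card Z; rewrite card_ord. Qed.

Definition pick0 (d : V) : 'I_m := odflt (i0 k) [pick i in supp d].
Lemma pick0_in d : d != 0 -> pick0 d \in supp d.
Proof.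
rewrite -supp_eq0 => /set0Pn [j jd]; rewrite /pick0; case: pickP => [i //|H].
by have := H j; rewrite jd.
Qed.

Definition ta (d : V) := (#|supp d|.-1)./2.
Definition tc (d : V) := (k - (#|supp d|.+1)./2)%N.
Definition PB (d : V) :=
  setX [set A : {set 'I_m} | A \subset supp d :\ pick0 d & #|A| == ta d]
       [set C : {set 'I_m} | C \subset ~: supp d & #|C| == tc d].
Definition gB (d : V) (p : {set 'I_m} * {set 'I_m}) : V := vec (~: (pick0 d |: (p.1 :|: p.2))).
Definition FamB d := gB d @: PB d.

Lemma FamB_prop d x : d != 0 -> (#|supp d| <= 2 * k)%N -> x \in FamB d ->
  (2 * k < #|supp x|)%N /\ (2 * k < #|supp (x + d)|)%N.
Proof.
move=> d0 dk /imsetP [[A C]]; rewrite !inE /= => /andP [/andP [AT /eqP Ac] /andP [CT /eqP Cc]] ->.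
have t0 := pick0_in d0.
have t1 : (1 <= #|supp d|)%N by rewrite card_gt0 supp_eq0.
have ATc : #|(supp d :\ pick0 d) :\: A| = (#|supp d|.-1 - #|A|)%N.
  rewrite cardsD (setIidPr AT); congr (_ - _)%N.
  by rewrite [in RHS](cardsD1 (pick0 d) (supp d)) t0 add1n.
rewrite /gB /=.
have cZ : (#|pick0 d |: (A :|: C)| <= k)%N.
  apply: leq_trans (cardU1_le _ _) _; have := cardU_le A C.
  rewrite Ac Cc /ta /tc.
move: t1 dk; set t := #|supp d|; set u := #|_ :|: _|; move=> *; lia.
split; first by rewrite suppK cardsC_m; move: cZ; set z := #|pick0 d |: _|; lia.
rewrite supp_add suppK sd_complA cardsC_m.
have sub : sd (pick0 d |: (A :|: C)) (supp d) \subset C :|: ((supp d :\ pick0 d) :\: A).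
  apply/subsetP => i; rewrite /sd in_setU !in_setD => /orP [/andP [iD iZ]|/andP [iZ iD]].
    move: iZ; rewrite in_setU1 in_setU => /orP [/eqP E|/orP [iA|iC]].
    - by move: iD; rewrite E t0.
    - by move: iD; have := subsetP AT i iA; rewrite in_setD1 => /andP [_ ->].
    - by rewrite in_setU iC.
  move: iZ; rewrite in_setU1 in_setU negb_or => /andP [ne /norP [nA nC]].
  by rewrite in_setU !in_setD in_set1 ne nA iD orbT.
have := subset_leq_card sub; have := cardU_le C ((supp d :\ pick0 d) :\: A).
rewrite ATc Ac Cc /ta /tc; move: t1 dk; set t := #|supp d|; set u := #|sd _ _|; set v := #|C :|: _|; move=> *; lia.
Qed.


Lemma FamB_t0 d y : d != 0 -> y \in FamB d -> pick0 d \notin supp y.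
Proof.
move=> d0 /imsetP [[A C] _ ->]; rewrite /gB suppK /=.
by rewrite in_setC in_setU1 eqxx.
Qed.

Lemma FamB_out d x : d != 0 -> x \in FamB d -> x + d \notin FamB d.
Proof.
move=> d0 xF; apply/negP => /(FamB_t0 d0); rewrite supp_add /sd in_setU !in_setD.
by rewrite (negPf (FamB_t0 d0 xF)) (pick0_in d0) orbT.
Qed.

Lemma vec_inj : injective (@vec m).
Proof. by move=> S1 S2 E; rewrite -(suppK S1) E suppK. Qed.

Lemma FamB_card d : d != 0 -> (#|supp d| <= 2 * k)%N -> (4 * k ^ 3 <= #|FamB d|)%N.
Proof.
move=> d0 dk; have t0 := pick0_in d0.
have t1 : (1 <= #|supp d|)%N by rewrite card_gt0 supp_eq0.
rewrite card_in_imset; last first.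
  move=> [A1 C1] [A2 C2]; rewrite !inE /=.
  move=> /andP [/andP [A1T _] /andP [C1T _]] /andP [/andP [A2T _] /andP [C2T _]].
  rewrite /gB /= => /vec_inj /setC_inj E.
  have nin : forall A C : {set 'I_m}, A \subset supp d :\ pick0 d -> C \subset ~: supp d ->
      pick0 d \notin A :|: C.
    move=> A C AT CT; rewrite in_setU negb_or; apply/andP; split.
      by apply/negP => /(subsetP AT); rewrite in_setD1 eqxx.
    by apply/negP => /(subsetP CT); rewrite in_setC t0.
  have E2 : A1 :|: C1 = A2 :|: C2.
    by rewrite -(setU1K (nin _ _ A1T C1T)) -(setU1K (nin _ _ A2T C2T)) E.
  have dis : [disjoint supp d :\ pick0 d & ~: supp d].
    rewrite -setI_eq0; apply/eqP/setP => i; rewrite !inE.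
    by case: (d ord0 i != 0); rewrite ?andbF ?andbT.
  by have [-> ->] := split_inj A1T A2T C1T C2T dis E2.
have e1 : #|supp d :\ pick0 d| = (#|supp d|).-1 by rewrite [in RHS](cardsD1 (pick0 d)) t0.
rewrite cardsX !cards_draws e1 cardsC_m.
have hN := N1 Hk.
have hk0 : (0 < k)%N by lia.
apply: leq_trans (prod_central (a := ta d) (c := tc d) hk0 _ hN) _.
  rewrite /ta /tc; move: t1 dk; set t := #|supp d|; lia.
apply: leq_mul; apply: leq_bin2l; rewrite /ta /tc; move: t1 dk; set t := #|supp d|; lia.
Qed.

Definition wC (d : V) := #|~: supp d|.
Definition betaC (d : V) := if (wC d <= k)%N then (k - (wC d)./2)%N else ((3 * k - wC d)./2)%N.
Definition alphaC (d : V) := (k - betaC d)%N.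
Definition PC (d : V) :=
  setX [set A : {set 'I_m} | A \subset ~: supp d & #|A| == alphaC d]
       [set C : {set 'I_m} | C \subset supp d & #|C| == betaC d].
Definition gC (p : {set 'I_m} * {set 'I_m}) : V := vec (~: (p.1 :|: p.2)).
Definition CandC d := gC @: PC d.

Lemma wC_le d : d != 0 -> (wC d <= 3 * k)%N.
Proof.
move=> d0; have : (1 <= #|supp d|)%N by rewrite card_gt0 supp_eq0.
rewrite /wC cardsC_m; set t := #|supp d|; lia.
Qed.

Lemma CandC_prop d x : d != 0 -> x \in CandC d ->
  [/\ (2 * k < #|supp x|)%N, x + d != 0 & (#|supp (x + d)| <= 2 * k)%N].
Proof.
move=> d0 /imsetP [[A C]]; rewrite !inE /= => /andP [/andP [AW /eqP Ac] /andP [CD /eqP Cc]] ->.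
rewrite /gC /=.
have hw := wC_le d0.
have cZ : (#|A :|: C| <= k)%N.
  have := cardU_le A C; rewrite Ac Cc /alphaC /betaC; move: hw.
  set w := wC d; case: (leqP w k) => hw'; lia.
have E : supp (vec (~: (A :|: C)) + d) = sd (A :|: C) (~: supp d).
  rewrite supp_add suppK; apply/setP => i; rewrite /sd !(in_setU, in_setD, in_setC).
  by case: (i \in A); case: (i \in C); case: (i \in supp d).
have s1 : C \subset sd (A :|: C) (~: supp d).
  apply/subsetP => i iC; rewrite /sd in_setU !in_setD in_setC in_setU iC orbT /=.
  by rewrite (subsetP CD i iC).
have s2 : (~: supp d) :\: A \subset sd (A :|: C) (~: supp d).
  apply/subsetP => i; rewrite in_setD => /andP [nA iW]; rewrite /sd in_setU !in_setD in_setU.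
  apply/orP; right; rewrite iW andbT (negPf nA) /=; apply/negP => iC.
  by move: iW; rewrite in_setC (subsetP CD i iC).
have s3 : sd (A :|: C) (~: supp d) \subset C :|: ((~: supp d) :\: A).
  apply/subsetP => i; rewrite /sd in_setU !in_setD !in_setU => /orP [/andP [nW /orP [iA|iC]]|/andP [nAC iW]].
  - by move: nW; rewrite (subsetP AW i iA).
  - by rewrite iC.
  - by move: nAC; rewrite negb_or => /andP [nA _]; rewrite in_setD nA iW orbT.
have cWA : #|(~: supp d) :\: A| = (wC d - alphaC d)%N by rewrite cardsD (setIidPr AW) Ac.
have h1 := subset_leq_card s1; have h2 := subset_leq_card s2; have h3 := subset_leq_card s3.
have h4 := cardU_le C ((~: supp d) :\: A).
rewrite suppK cardsC_m -supp_eq0 E -cards_eq0.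
move: h1 h2 h3 h4; rewrite cWA Cc /alphaC /betaC; move: hw cZ.
set w := wC d; set z := #|A :|: C|; set u := #|sd _ _|; set v := #|C :|: _|.
case: (leqP w k) => hw' *; split; lia.
Qed.

Lemma CandC_card d : d != 0 -> (4 * k ^ 2 <= #|CandC d|)%N.
Proof.
move=> d0; have hw := wC_le d0.
rewrite card_in_imset; last first.
  move=> [A1 C1] [A2 C2]; rewrite !inE /=.
  move=> /andP [/andP [A1W _] /andP [C1D _]] /andP [/andP [A2W _] /andP [C2D _]].
  rewrite /gC /= => /vec_inj /setC_inj E.
  have dis : [disjoint ~: supp d & supp d].
    by rewrite -setI_eq0 setIC setICr.
  by have [-> ->] := split_inj A1W A2W C1D C2D dis E.
have e1 : #|supp d| = (m - wC d)%N by rewrite /wC cardsC_m; move: (card_le_m (supp d)); lia.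
rewrite cardsX !cards_draws e1 -/(wC d).
have hN := N1 Hk.
have hk0 : (0 < k)%N by lia.
have hab : (alphaC d + betaC d = k)%N.
  rewrite /alphaC /betaC; move: hw; set w := wC d; case: (leqP w k) => hw'; lia.
apply: leq_trans (prod_central2 hk0 hab hN) _.
apply: leq_mul; apply: leq_bin2l; rewrite /alphaC /betaC; move: hw; set w := wC d;
  case: (leqP w k) => hw'; lia.
Qed.
End Fam.

Import GRing.Theory.
Open Scope ring_scope.

Lemma card_bigcup_le (T I : finType) (B : I -> {set T}) :
  (#|\bigcup_i B i| <= \sum_i #|B i|)%N.
Proof.
apply: (big_ind2 (fun (U : {set T}) n => #|U| <= n)%N) => //.
- by rewrite cards0.
- move=> U1 U2 n1 n2 H1 H2; apply: leq_trans (cardU_le _ _) _; exact: leq_add.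
Qed.

Section Final.
Variable k : nat.
Local Notation m := (3 * k + 1)%N.
Local Notation V := 'rV['F_2]_m.
Hypothesis Hk : (14 <= k)%N.
Local Notation FT := {ffun V -> 'I_k}.

Definition condB (d : V) := (d != 0) && (#|supp d| <= 2 * k)%N.
Definition BadB (e : V * 'I_k * 'I_k) : {set FT} :=
  if condB e.1.1 then
    [set F : FT | [forall x in FamB e.1.1, ~~ ((F x == e.1.2) && (F (x + e.1.1) == e.2))]]
  else set0.
Definition BadC (e : V * 'I_k) : {set FT} :=
  if e.1 != 0 then [set F : FT | [forall x in CandC e.1, F x != e.2]] else set0.

Lemma BadB_card e : (#|BadB e| * 2 ^ (4 * k) <= k ^ #|V|)%N.
Proof.
rewrite /BadB; case: ifP => [/andP [d0 dk]|_]; last by rewrite cards0.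
set d := e.1.1.
have sinj : injective (fun x : V => x + d) by exact: addIr.
have H := count_fam_pair e.1.2 e.2 sinj (fun x => FamB_out d0) (subxx (FamB d)).
rewrite card_ord in H.
have hF := FamB_card Hk d0 dk.
have hk0 : (0 < k ^ 2)%N by rewrite expn_gt0; lia.
have hle : (k ^ 2 * (4 * k) <= #|FamB d|)%N.
  by apply: leq_trans hF; rewrite mulnCA -expnSr.
have hb := bern_pow hk0 hle.
have P0 : (0 < (k ^ 2) ^ #|FamB d|)%N by rewrite expn_gt0 hk0.
rewrite -(leq_pmul2r P0) cardsE mulnAC H -mulnA leq_mul2l; apply/orP; right.
exact: hb.
Qed.

Lemma BadC_card e : (#|BadC e| * 2 ^ (4 * k) <= k ^ #|V|)%N.
Proof.
rewrite /BadC; case: ifP => [d0|_]; last by rewrite cards0.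
set d := e.1.
have H := count_fam_single e.2 (CandC d).
rewrite card_ord in H.
have hF := CandC_card Hk d0.
have hk0 : (0 < k)%N by lia.
have hle : (k * (4 * k) <= #|CandC d|)%N.
  by apply: leq_trans hF; rewrite mulnCA mulnn.
have hb := bern_pow hk0 hle.
have P0 : (0 < k ^ #|CandC d|)%N by rewrite expn_gt0 hk0.
rewrite -(leq_pmul2r P0) cardsE mulnAC H -mulnA leq_mul2l; apply/orP; right.
exact: hb.
Qed.

Lemma cardV : #|V| = (2 ^ m)%N.
Proof. by rewrite card_mx card_Fp // mul1n. Qed.

Lemma exists_good : exists F : FT, (forall e, F \notin BadB e) /\ (forall e, F \notin BadC e).
Proof.
set U := (\bigcup_e BadB e) :|: (\bigcup_e BadC e).
suff [F FU] : exists F, F \notin U.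
  exists F; split => e; apply: contra FU => Fe; rewrite in_setU; apply/orP.
    by left; apply/bigcupP; exists e.
  by right; apply/bigcupP; exists e.
have sB : ((\sum_e #|BadB e|) * 2 ^ (4 * k) <= #|V| * k * k * k ^ #|V|)%N.
  have h : (\sum_e (#|BadB e| * 2 ^ (4 * k)) <= \sum_(e : V * 'I_k * 'I_k) k ^ #|V|)%N.
    by apply: leq_sum => e _; exact: BadB_card.
  move: h; rewrite sum_nat_const !card_prod !card_ord -big_distrl //=.
have sC : ((\sum_e #|BadC e|) * 2 ^ (4 * k) <= #|V| * k * k ^ #|V|)%N.
  have h : (\sum_e (#|BadC e| * 2 ^ (4 * k)) <= \sum_(e : V * 'I_k) k ^ #|V|)%N.
    by apply: leq_sum => e _; exact: BadC_card.
  move: h; rewrite sum_nat_const !card_prod !card_ord -big_distrl //=.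
have cU : (#|U| <= \sum_e #|BadB e| + \sum_e #|BadC e|)%N.
  apply: leq_trans (cardU_le _ _) _; apply: leq_add; exact: card_bigcup_le.
have hN := N2 Hk.
have hV : (#|V| * (k * k + k) < 2 ^ (4 * k))%N.
  rewrite cardV.
  have e4 : (2 ^ (4 * k) = 2 ^ m * 2 ^ (k - 1))%N by rewrite -expnD; congr (2 ^ _)%N; lia.
  rewrite e4 ltn_mul2l expn_gt0 /=.
  have : (2 * (k ^ 2 + k) < 2 * 2 ^ (k - 1))%N.
    by rewrite -expnS (_ : (k - 1).+1 = k)%N //; lia.
  by rewrite ltn_mul2l /= -mulnn.
have kV : (0 < k ^ #|V|)%N by rewrite expn_gt0; apply/orP; left; lia.
have cU2 : (#|U| < #|FT|)%N.
  rewrite card_ffun card_ord -(ltn_pmul2r (expn_gt0 2 (4 * k))).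
  apply: leq_ltn_trans (leq_mul cU (leqnn _)) _.
  rewrite mulnDl; apply: leq_ltn_trans (leq_add sB sC) _.
  rewrite -mulnDl mulnC ltn_pmul2l // -mulnA -mulnDr; exact: hV.
case: (pickP (fun F => F \notin U)) => [F HF|H]; first by exists F.
have UT : U = setT by apply/setP => F; rewrite in_setT; move: (H F) => /= /negbFE.
by move: cU2; rewrite UT cardsT ltnn.
Qed.
End Final.

Lemma good_F k : (14 <= k)%N -> exists F : 'rV['F_2]_(3 * k + 1) -> 'I_k,
  (forall d, d != 0 -> (#|supp d| <= 2 * k)%N -> forall i j : 'I_k, exists x,
    [/\ (2 * k < #|supp x|)%N, (2 * k < #|supp (x + d)|)%N, F x = i & F (x + d) = j]) /\
  (forall d, d != 0 -> forall i : 'I_k, exists x,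
    [/\ (2 * k < #|supp x|)%N, F x = i, x + d != 0 & (#|supp (x + d)| <= 2 * k)%N]).
Proof.
move=> Hk; have [F [HB HC]] := exists_good Hk.
exists (fun x => F x); split.
  move=> d d0 dk i j; have := HB (d, i, j).
  rewrite /BadB /condB /= d0 dk /= inE => /forall_inPn [x xF].
  rewrite negbK => /andP [/eqP Hx /eqP Hy].
  have [h1 h2] := FamB_prop Hk d0 dk xF.
  by exists x.
move=> d d0 i; have := HC (d, i).
rewrite /BadC /= d0 /= inE => /forall_inPn [x xF]; rewrite negbK => /eqP Hx.
have [h1 h2 h3] := CandC_prop Hk d0 xF.
by exists x.
Qed.

Lemma rep_main k n : (14 <= k)%N -> (1 <= n)%N -> (n <= k)%N ->
  representable_over n 'rV['F_2]_(3 * k + 1).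
Proof.
move=> Hk; case: n => [//|n] _ nk.
have [F [HB HC]] := good_F Hk.
pose F' := fun x => (inord (minn (F x) n) : 'I_n.+1).
have lift : forall i : 'I_n.+1, exists i' : 'I_k, forall x, F x = i' -> F' x = i.
  move=> i; have ik : (i < k)%N by apply: leq_trans (ltn_ord i) nk.
  exists (Ordinal ik) => x Hx; rewrite /F' Hx /=.
  have -> : minn i n = i by apply/minn_idPl; rewrite -ltnS.
  by rewrite inord_val.
exists (cayley (col F')); apply: rep_col; first by lia.
  move=> d d0 dk i j; have [i' Hi] := lift i; have [j' Hj] := lift j.
  have [x [h1 h2 h3 h4]] := HB d d0 dk i' j'.
  by exists x; split => //; [apply: Hi | apply: Hj].
move=> d d0 i; have [i' Hi] := lift i.
have [x [h1 h2 h3 h4]] := HC d d0 i'.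
by exists x; split => //; apply: Hi.
Qed.

Close Scope ring_scope.
Theorem mainTheorem2 :
  (forall n : nat, 2 <= n ->
     exists K : nat, forall k : nat, K <= k ->
       representable_over n 'rV['F_2]_(3 * k + 1))
  /\
  (forall n : nat, 14 <= n ->
     representable_over n 'rV['F_2]_(3 * n + 1)).
Proof.
split.
  move=> n n2; exists (maxn n 14) => k Hk.
  apply: rep_main; move: Hk; rewrite geq_max => /andP [h1 h2] //; lia.
move=> n n14; apply: rep_main => //; lia.
Qed.
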